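(* Let $0\le k\le r$ and $(\mathcal F|\mathcal G,\mathbf e)\in\mathcal T^{n-k-1}$, with biflats $F_1|G_1,\dots,F_{n-k-1}|G_{n-k-1}$ and $F_0=\emptyset$, $F_{n-k}=E$, $G_0=E$, $G_{n-k}=\emptyset$. Suppose $x_{\mathcal F|\mathcal G}\,\gamma^k\neq0$ in $A_{M,M^\perp}$. Then (1) there is exactly one index $d\in\{0,1,\dots,n-k-1\}$ with $F_d\subsetneq F_{d+1}$ and $G_d\supsetneq G_{d+1}$; (2) the distinct flats among $F_1,\dots,F_{n-k-1}$ other than $E$ are exactly $r-k$ in number and have ranks $1,2,\dots,r-k$ in $M$, and the sets $G_0,G_1,\dots,G_{n-k}$ include a flat of $M^\perp$ of every rank $0,1,\dots,n-r$.
   Context: Let $M$ be a matroid with no loops and no coloops on the ground set $E=\{0,1,\dots,n\}$, totally ordered by the usual order of integers, of rank $r+1$; its dual $M^\perp$ has rank $n-r$. A biflat of $M$ is a pair $F|G$ where $F$ is a flat of $M$, $G$ is a flat of $M^\perp$, both are nonempty, they are not both equal to $E$, and $F\cup G=E$. Two biflats $F|G$, $F'|G'$ are compatible if ($F\subseteq F'$ and $G\supseteq G'$) or ($F\supseteq F'$ and $G\subseteq G'$). A biflag is a set of pairwise compatible biflats with $\bigcup_{F|G}(F\cap G)\neq E$; its length is its number of biflats. Conormal Chow ring: $S$ is the polynomial ring over $\mathbb R$ in variables $x_{F|G}$, one per biflat; $x_{\mathcal F|\mathcal G}=\prod_{F|G\in\mathcal F|\mathcal G}x_{F|G}$. For $i\in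 E$, $\gamma_i=\sum_{i\in F,\,F\neq E}x_{F|G}$, $\bar\gamma_i=\sum_{i\in G,\,G\neq E}x_{F|G}$. $I$ is generated by the $x_{\mathcal F|\mathcal G}$ for sets of biflats that are not biflags, $J$ by all $\gamma_i-\gamma_j$, $\bar\gamma_i-\bar\gamma_j$; $A_{M,M^\perp}=S/(I+J)$, and $\gamma$ is the common class of the $\gamma_i$. $\mathcal T^m$: the set of pairs $(\mathcal F|\mathcal G,\mathbf e)$ with $\mathcal F|\mathcal G$ a biflag of length $m$ with biflats indexed $F_1|G_1,\dots,F_m|G_m$, $F_1\subseteq\cdots\subseteq F_m$, $G_1\supseteq\cdots\supseteq G_m$, and $\mathbf e=(e_1,\dots,e_m)$ distinct elements of $E$ with $e_i\in F_i\cap G_i$ and $e_i=\max\big(E-\bigcup_{j:\,e_j>e_i}(F_j\cap G_j)\big)$ for all $i$. *)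

(* Defs.v *)
From HB Require Import structures.
From mathcomp Require Import all_boot all_order all_algebra.
From mathcomp Require Import reals.
From mathcomp Require Import mpoly.

Set Implicit Arguments.
Unset Strict Implicit.
Unset Printing Implicit Defensive.

Import Order.TTheory GRing.Theory Num.Theory.


Section Matroid.
Variable n : nat.
Local Notation E := 'I_n.+1.
Variable rk : {set E} -> nat.

Definition is_matroid_rank : Prop :=
  [/\ forall A : {set E}, rk A <= #|A|,
      forall A B : {set E}, A \subset B -> rk A <= rk B
    & forall A B : {set E}, rk (A :|: B) + rk (A :&: B) <= rk A + rk B].

Definition dual_rank (A : {set E}) : nat := #|A| + rk (~: A) - rk [set: E].

Definition no_loops : Prop := forall x : E, rk [set x] = 1.
Definition no_coloops : Prop := forall x : E, rk (~: [set x]) = rk [set: E].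

Definition is_flat (rho : {set E} -> nat) (F : {set E}) : bool :=
  [forall x, (x \notin F) ==> (rho F < rho (x |: F))].

Definition is_biflat (P : {set E} * {set E}) : bool :=
  [&& is_flat rk P.1, is_flat dual_rank P.2, P.1 != set0, P.2 != set0,
      ~~ ((P.1 == [set: E]) && (P.2 == [set: E])) & P.1 :|: P.2 == [set: E]].

Definition biflat := {P : {set E} * {set E} | is_biflat P}.

Definition compatible (b b' : biflat) : bool :=
  let: (F, G) := val b in let: (F', G') := val b' in
  ((F \subset F') && (G' \subset G)) || ((F' \subset F) && (G \subset G')).

Definition is_biflag (B : {set biflat}) : bool :=
  [forall b in B, forall b' in B, compatible b b'] &&
  (\bigcup_(b in B) ((val b).1 :&: (val b).2) != [set: E]).

Variable R : realType.
Local Open Scope ring_scope.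
Definition nvar := #|{: biflat}|.
Definition chowS := {mpoly R[nvar]}.

Definition xvar (b : biflat) : chowS := 'X_(enum_rank b).

Definition gam (i : E) : chowS :=
  \sum_(b : biflat | (i \in (val b).1) && ((val b).1 != [set: E])) xvar b.
Definition gambar (i : E) : chowS :=
  \sum_(b : biflat | (i \in (val b).2) && ((val b).2 != [set: E])) xvar b.

Definition chow_gen (p : chowS) : Prop :=
  (exists B : {set biflat}, ~~ is_biflag B /\ p = \prod_(b in B) xvar b)
  \/ (exists i j : E, p = gam i - gam j)
  \/ (exists i j : E, p = gambar i - gambar j).

Definition in_ideal (S : chowS -> Prop) (p : chowS) : Prop :=
  exists s : seq (chowS * chowS),
    (forall q, q \in s -> S q.2) /\ p = \sum_(q <- s) q.1 * q.2.

(* p is nonzero in A_{M,M^perp} = S/(I+J) *)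
Definition nonzero_in_chow (p : chowS) : Prop := ~ in_ideal chow_gen p.
Local Close Scope ring_scope.

End Matroid.

Definition Fext n rk (m : nat) (f : nat -> biflat rk) (d : nat) : {set 'I_n.+1} :=
  if d == 0 then set0 else if d <= m then (val (f d)).1 else [set: 'I_n.+1].
Definition Gext n rk (m : nat) (f : nat -> biflat rk) (d : nat) : {set 'I_n.+1} :=
  if d == 0 then [set: 'I_n.+1] else if d <= m then (val (f d)).2 else set0.

(* (f, e) in T^m : f 1, ..., f m are the biflats (indices outside [1,m] ignored) *)
Definition in_T n rk (m : nat) (f : nat -> biflat rk) (e : nat -> 'I_n.+1) : Prop :=
  is_biflag [set f i.+1 | i : 'I_m] /\
  [/\ (forall i j, 0 < i <= m -> 0 < j <= m -> f i = f j -> i = j),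
      (forall i j, 0 < i -> i <= j -> j <= m ->
         ((val (f i)).1 \subset (val (f j)).1) && ((val (f j)).2 \subset (val (f i)).2)),
      (forall i j, 0 < i <= m -> 0 < j <= m -> e i = e j -> i = j),
      (forall i, 0 < i <= m -> e i \in (val (f i)).1 :&: (val (f i)).2)
    & (forall i, 0 < i <= m ->
         let S := ~: \bigcup_(j : 'I_m | e i < e j.+1)
                       ((val (f j.+1)).1 :&: (val (f j.+1)).2) in
         e i \in S /\ forall y, y \in S -> y <= e i)].

(* Main.v *)
Require Import Defs.
From HB Require Import structures.
From mathcomp Require Import all_boot all_order all_algebra.
From mathcomp Require Import reals.
From mathcomp Require Import mpoly.
From mathcomp Require Import ring zify.
Import GRing.Theory.

Set Implicit Arguments.
Unset Strict Implicit.
Unset Printing Implicit Defensive.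


Section Ideal.
Variables (n : nat) (rk : {set 'I_n.+1} -> nat) (R : realType).
Local Notation P := (chowS rk R).
Local Open Scope ring_scope.
Implicit Types (S : P -> Prop) (p q : P).

Lemma ideal0 S : in_ideal S 0.
Proof. by exists [::]; split => //; rewrite big_nil. Qed.

Lemma idealD S p q : in_ideal S p -> in_ideal S q -> in_ideal S (p + q).
Proof.
case=> [s1 [H1 ->]] [s2 [H2 ->]]; exists (s1 ++ s2); split; last by rewrite big_cat.
by move=> x; rewrite mem_cat => /orP[/H1|/H2].
Qed.

Lemma idealMl S a p : in_ideal S p -> in_ideal S (a * p).
Proof.
case=> [s [H ->]]; exists [seq (a * x.1, x.2) | x <- s]; split.
  by move=> x /mapP[y ys ->] /=; apply: H.
by rewrite big_map big_distrr /=; apply: eq_bigr => x _; rewrite mulrA.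
Qed.

Lemma idealMr S a p : in_ideal S p -> in_ideal S (p * a).
Proof. by rewrite mulrC; apply: idealMl. Qed.

Lemma ideal_gen S g : S g -> in_ideal S g.
Proof. by move=> Hg; exists [:: (1, g)]; split; [move=> x; rewrite inE => /eqP -> | rewrite big_seq1 mul1r]. Qed.

Lemma ideal_sum S (I : finType) (Q : pred I) (F : I -> P) :
  (forall i, Q i -> in_ideal S (F i)) -> in_ideal S (\sum_(i | Q i) F i).
Proof.
move=> H; apply: (big_ind (in_ideal S)); [exact: ideal0 | exact: idealD | exact: H].
Qed.
End Ideal.

Section L1.
Variables (n : nat) (rk : {set 'I_n.+1} -> nat) (R : realType).
Hypothesis Hmat : is_matroid_rank rk.
Local Notation E := 'I_n.+1.

Lemma rk_mono (A B : {set E}) : A \subset B -> rk A <= rk B.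
Proof. by case: Hmat => _ H _; apply: H. Qed.

Lemma flat_rank_lt (F F' : {set E}) : is_flat rk F -> F \proper F' -> rk F < rk F'.
Proof.
move=> /forallP Hf /properP [sFF' [x xF' xF]].
have := implyP (Hf x) xF => /leq_trans; apply; apply: rk_mono.
by apply/subsetP => y; rewrite !inE => /orP[/eqP->|/(subsetP sFF')].
Qed.

Lemma compatibleE (b b' : biflat rk) : compatible b b' =
  (((val b).1 \subset (val b').1) && ((val b').2 \subset (val b).2)) ||
  (((val b').1 \subset (val b).1) && ((val b).2 \subset (val b').2)).
Proof. by rewrite /compatible; case: (val b) => ? ?; case: (val b') => ? ?. Qed.

Lemma biflag_comp (B : {set biflat rk}) b b' : is_biflag B -> b \in B -> b' \in B ->
  compatible b b'.
Proof.
by case/andP => /forall_inP H _ bB b'B; move/forall_inP: (H b bB); apply.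
Qed.

Local Open Scope ring_scope.

Lemma L1 (c : nat) : forall (B : {set biflat rk}) (b0 : biflat rk),
  b0 \in B -> (val b0).1 != [set: E] -> (rk [set: E] <= rk (val b0).1 + c)%N ->
  in_ideal (@chow_gen n rk R) ((\prod_(b in B) xvar R b) * gam rk R ord0 ^+ c).
Proof.
elim: c => [|c IH] B b0 b0B b0T.
  rewrite addn0 => Hle; exfalso.
  have : (rk (val b0).1 < rk [set: E])%N.
    apply: flat_rank_lt; first by case/andP: (valP b0).
    by rewrite properT.
  by rewrite ltnNge Hle.
move=> Hle.
have [i iF] : exists i, i \notin (val b0).1.
  apply/existsP; rewrite -negb_forall; apply: contra b0T => /forallP H.
  by apply/eqP/setP => x; rewrite inE H.
set xB := \prod_(b in B) xvar R b.
have -> : xB * gam rk R ord0 ^+ c.+1 =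
   (xB * gam rk R ord0 ^+ c) * (gam rk R ord0 - gam rk R i)
   + \sum_(b : biflat rk | (i \in (val b).1) && ((val b).1 != [set: E]))
        (xB * xvar R b * gam rk R ord0 ^+ c).
  rewrite -big_distrl /= -big_distrr /= -/(gam rk R i) exprS.
  by ring.
apply: idealD.
  by apply: idealMl; apply: ideal_gen; right; left; exists ord0, i.
apply: ideal_sum => b /andP[ibF bT].
set B' := b |: B.
have HB' : xB * xvar R b = (\prod_(b' in B') xvar R b') * (if b \in B then xvar R b else 1).
  rewrite /B' /xB; case: ifP => bB.
    by rewrite (_ : b |: B = B) //; apply/setUidPr; rewrite sub1set.
  by rewrite big_setU1 /= ?bB // mulr1 mulrC.
rewrite HB' mulrAC.
have [Hbf|Hnbf] := boolP (is_biflag B'); last first.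
  apply: idealMr; apply: idealMr; apply: ideal_gen; left; by exists B'.
apply: idealMr.
apply: (IH B' b) => //; first by rewrite /B' setU11.
have cmp := biflag_comp Hbf (setU11 b B) (setU1r b b0B).
have Hlt : (rk (val b0).1 < rk (val b).1)%N.
  apply: flat_rank_lt; first by case/andP: (valP b0).
  move: cmp; rewrite compatibleE => /orP[/andP[/subsetP Hs _]|/andP[Hs _]].
    by have := Hs i ibF; rewrite (negbTE iF).
  rewrite properEneq Hs andbT; apply/eqP => Heq.
  by move: iF; rewrite Heq ibF.
by apply: leq_trans Hle _; rewrite addnS -addSn leq_add2r.
Qed.

End L1.



Lemma count_lemma (t a : nat -> nat) (m d0 : nat) :
  (forall d, d <= m -> t d + a d <= t d.+1) -> (forall d, d <= m -> 0 < a d) ->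
  t 0 = 0 -> t m.+1 = m.+2 -> d0 <= m -> 1 < a d0 ->
  forall d, d <= m -> t d.+1 = t d + a d /\ a d = (d == d0).+1.
Proof.
move=> Hs Ha H0 Hm Hd0 Ha0.
have lo : forall d, d <= m.+1 -> d + (d0 < d) <= t d.
  elim=> [|d IH] Hd; first by rewrite H0.
  have := Hs d Hd; have := Ha d Hd; have := IH (ltnW Hd).
  case: (ltngtP d0 d) => [h|h|h]; first [ have: d0 < d.+1 by lia | idtac ];
  try (move=> *; lia).
  move: Ha0; rewrite h => Ha0 *; lia.
have hi : forall j, j <= m.+1 -> t (m.+1 - j) + j + (m.+1 - j <= d0) <= t m.+1.
  elim=> [|j IH] Hj; first by rewrite subn0 addn0 /= ltnNge Hd0 addn0.
  have e : m.+1 - j = (m.+1 - j.+1).+1 by lia.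
  have := IH (ltnW Hj); rewrite e.
  have := Hs (m.+1 - j.+1) ltac:(lia); have := Ha (m.+1 - j.+1) ltac:(lia).
  case: (ltngtP (m.+1 - j.+1) d0) => [h|h|h] *; try lia.
  move: Ha0; rewrite -h => *; lia.
have ex : forall d, d <= m.+1 -> t d = d + (d0 < d).
  move=> d Hd; have := lo d Hd; have := hi (m.+1 - d) ltac:(lia).
  rewrite (_ : m.+1 - (m.+1 - d) = d) ?Hm; last lia.
  by case: (ltngtP d0 d) => h; move=> *; lia.
move=> d Hd; have E1 := ex d (leqW Hd); have E2 := ex d.+1 Hd.
have S := Hs d Hd; have A := Ha d Hd.
case: eqVneq => [e|/eqP ne]; first by subst d; lia.
lia.
Qed.

Lemma ivt (h : nat -> nat) (N j : nat) :
  (forall d, d < N -> h d.+1 <= (h d).+1) -> h 0 <= j <= h N -> exists2 d, d <= N & h d = j.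
Proof.
elim: N => [|N IH] Hs /andP[H0 HN]; first by exists 0 => //; apply/eqP; rewrite eqn_leq H0 HN.
case: (leqP j (h N)) => Hj.
  have [d dN hd] := IH (fun d dN => Hs d (ltnW dN)) (introT andP (conj H0 Hj)).
  by exists d => //; apply: leqW.
exists N.+1 => //; have := Hs N (ltnSn N); lia.
Qed.



Section Mat.
Variables (n : nat) (rk : {set 'I_n.+1} -> nat).
Hypothesis Hmat : is_matroid_rank rk.
Hypothesis Hloop : no_loops rk.
Hypothesis Hcoloop : no_coloops rk.
Local Notation E := 'I_n.+1.

Lemma rk_card (A : {set E}) : rk A <= #|A|.
Proof. by case: Hmat. Qed.

Lemma rk0 : rk set0 = 0.
Proof. by apply/eqP; rewrite -leqn0 -(cards0 E) rk_card. Qed.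

Lemma rk_pos (A : {set E}) : A != set0 -> 0 < rk A.
Proof.
case/set0Pn => x xA; rewrite -(Hloop x); apply: rk_mono => //.
by rewrite sub1set.
Qed.

Lemma rkU_le (X Y : {set E}) : rk (X :|: Y) <= rk X + #|Y|.
Proof.
case: Hmat => _ _ H; have := H X Y; have := rk_card Y; lia.
Qed.

Lemma dual_rank_mono (A B : {set E}) : A \subset B -> dual_rank rk A <= dual_rank rk B.
Proof.
move=> sAB; rewrite /dual_rank.
have e1 : ~: A = ~: B :|: (B :\: A).
  apply/setP => x; rewrite !inE; case: (x \in A) (x \in B) (subsetP sAB x) => [] [] //=.
  by move=> /(_ isT).
have e2 : #|B| = #|A| + #|B :\: A|.
  by rewrite -(cardsID A B) (setIidPr sAB) addnC setDE.
have := rkU_le (~: B) (B :\: A); rewrite -e1 e2; lia.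
Qed.

Lemma dual_rank0 : dual_rank rk set0 = 0.
Proof. by rewrite /dual_rank cards0 setC0 add0n subnn. Qed.

Lemma dual_rank_pos (A : {set E}) : A != set0 -> 0 < dual_rank rk A.
Proof.
case/set0Pn => x xA.
have : dual_rank rk [set x] <= dual_rank rk A by apply: dual_rank_mono; rewrite sub1set.
by rewrite /dual_rank cards1 Hcoloop; lia.
Qed.

Lemma dual_rankT : dual_rank rk setT = n.+1 - rk setT.
Proof. by rewrite /dual_rank cardsT card_ord setCT rk0 addn0. Qed.

Lemma dual_flat_rank_lt (F F' : {set E}) :
  is_flat (dual_rank rk) F -> F \proper F' -> dual_rank rk F < dual_rank rk F'.
Proof.
move=> /forallP Hf /properP [sFF' [x xF' xF]].
have := implyP (Hf x) xF => /leq_trans; apply; apply: dual_rank_mono.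
by apply/subsetP => y; rewrite !inE => /orP[/eqP->|/(subsetP sFF')].
Qed.

Lemma r_lt_n : rk setT <= n.
Proof.
have := rk_card (~: [set ord0]); rewrite Hcoloop cardsC1 card_ord //.
Qed.

End Mat.



Section Comb.
Variables (n : nat) (rk : {set 'I_n.+1} -> nat).
Hypothesis Hmat : is_matroid_rank rk.
Hypothesis Hloop : no_loops rk.
Hypothesis Hcoloop : no_coloops rk.
Local Notation E := 'I_n.+1.
Variables (m : nat) (f : nat -> biflat rk).
Hypothesis Hinj : forall i j, 0 < i <= m -> 0 < j <= m -> f i = f j -> i = j.
Hypothesis Hchain : forall i j, 0 < i -> i <= j -> j <= m ->
         ((val (f i)).1 \subset (val (f j)).1) && ((val (f j)).2 \subset (val (f i)).2).
Hypothesis Hflag : is_biflag [set f i.+1 | i : 'I_m].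
Local Notation Fx := (Fext m f).
Local Notation Gx := (Gext m f).

Lemma biflatP (b : biflat rk) :
  [/\ is_flat rk (val b).1, is_flat (dual_rank rk) (val b).2, (val b).1 != set0,
      (val b).2 != set0 & (val b).1 :|: (val b).2 = setT].
Proof.
by case/and5P: (valP b) => h1 h2 h3 h4 /andP[_ /eqP h6]; split.
Qed.

Lemma setT_neq0 : [set: E] != set0.
Proof. by apply/set0Pn; exists ord0. Qed.

Lemma Fmono d : d <= m -> Fx d \subset Fx d.+1.
Proof.
rewrite /Fext; case: d => [|d] Hd /=; first exact: sub0set.
rewrite Hd; case: ifP => Hd1; last exact: subsetT.
by case/andP: (Hchain (ltn0Sn d) (leqnSn _) Hd1).
Qed.

Lemma Gmono d : d <= m -> Gx d.+1 \subset Gx d.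
Proof.
rewrite /Gext; case: d => [|d] Hd /=; first exact: subsetT.
rewrite Hd; case: ifP => Hd1; last exact: sub0set.
by case/andP: (Hchain (ltn0Sn d) (leqnSn _) Hd1).
Qed.

Lemma Fmono_le d1 d2 : d1 <= d2 -> d2 <= m.+1 -> Fx d1 \subset Fx d2.
Proof.
elim: d2 => [|d2 IH]; first by rewrite leqn0 => /eqP ->.
rewrite leq_eqVlt => /orP[/eqP -> //|]; rewrite ltnS => H1 H2.
by apply: subset_trans (IH H1 (ltnW H2)) (Fmono H2).
Qed.

Lemma FGU d : d <= m.+1 -> Fx d :|: Gx d = setT.
Proof.
rewrite /Fext /Gext; case: d => [|d] Hd /=; first by rewrite set0U.
case: ifP => _; last by rewrite setU0.
by case: (biflatP (f d.+1)).
Qed.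

Lemma Fflat d : 0 < d <= m -> is_flat rk (Fx d).
Proof.
by case/andP=> H0 H1; rewrite /Fext eqn0Ngt H0 /= H1; case: (biflatP (f d)).
Qed.

Lemma Gflat d : 0 < d <= m -> is_flat (dual_rank rk) (Gx d).
Proof.
by case/andP=> H0 H1; rewrite /Gext eqn0Ngt H0 /= H1; case: (biflatP (f d)).
Qed.

Lemma Fne0 d : 0 < d -> Fx d != set0.
Proof.
move=> H0; rewrite /Fext eqn0Ngt H0 /=; case: ifP => _; last exact: setT_neq0.
by case: (biflatP (f d)).
Qed.

Lemma Gne0 d : d <= m -> Gx d != set0.
Proof.
rewrite /Gext; case: d => [|d] Hd /=; first exact: setT_neq0.
by rewrite Hd; case: (biflatP (f d.+1)).
Qed.

Lemma step d : d <= m -> (Fx d != Fx d.+1) || (Gx d != Gx d.+1).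
Proof.
move=> Hd.
case: d Hd => [|d] Hd.
  apply/orP; left; rewrite /Fext /= eq_sym; exact: (Fne0 (ltn0Sn 0)).
case: (ltngtP d.+1 m) Hd => // [Hlt|Heq] _.
  have Hne : f d.+1 != f d.+2.
    have h1 : 0 < d.+1 <= m by rewrite /= ltnW.
    have h2 : 0 < d.+2 <= m by exact: Hlt.
    by apply/eqP => /(Hinj h1 h2) /eqP; rewrite eqn_leq ltnn andbF.
  rewrite /Fext /Gext /= Hlt (ltnW Hlt).
  apply: contraR Hne; rewrite negb_or !negbK => /andP[/eqP h1 /eqP h2].
  by apply/eqP/val_inj; rewrite [val (f d.+1)]surjective_pairing [val (f d.+2)]surjective_pairing h1 h2.
apply/orP; right; rewrite /Gext /= -Heq leqnn ltnn.
by case: (biflatP (f d.+1)).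
Qed.

Lemma simul : exists2 d, d <= m & Fx d \proper Fx d.+1 /\ Gx d.+1 \proper Gx d.
Proof.
have [/existsP[d /andP[h1 h2]]|Hn] :=
  boolP [exists d : 'I_m.+1, (Fx d \proper Fx d.+1) && (Gx d.+1 \proper Gx d)].
  by exists d => //; rewrite -ltnS.
exfalso; case/andP: Hflag => _ /negP; apply; apply/eqP/setP => x; rewrite inE.
have Hex : exists d, x \in Fx d by exists m.+1; rewrite /Fext /= ltnn inE.
case: (ex_minnP Hex) => d' xd' dmin.
have Hd'm : d' <= m.+1 by apply: dmin; rewrite /Fext /= ltnn inE.
case: d' xd' dmin Hd'm => [|d] xd dmin Hdm; first by rewrite /Fext /= inE in xd.
have xnd : x \notin Fx d by apply/negP => /dmin; rewrite ltnn.
have Fp : Fx d \proper Fx d.+1.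
  by rewrite properEneq Fmono // andbT; apply/eqP => e; rewrite e xd in xnd.
have Geq : Gx d.+1 = Gx d.
  apply/eqP; rewrite eqEsubset Gmono //=.
  move: Hn; rewrite negb_exists => /forallP /(_ (Ordinal (Hdm : d < m.+1))) /=; rewrite Fp /= properE Gmono //=.
  by rewrite negbK.
have xG : x \in Gx d.+1.
  by rewrite Geq; move: (FGU (leqW Hdm)) => /setP /(_ x); rewrite !inE (negbTE xnd).
case: (ltngtP d m) Hdm => [Hlt|Hgt|Heq] Hdm'; last 2 first.
  by exfalso; move: Hgt Hdm'; lia.
  by move: xG; rewrite /Gext /= Heq ltnn inE.
apply/bigcupP; exists (f d.+1); first by apply/imsetP; exists (Ordinal Hlt).
by rewrite inE; move: xd xG; rewrite /Fext /Gext /= Hlt => -> ->.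
Qed.


Variables (r k : nat).
Hypothesis Hrank : rk [set: E] = r.+1.
Hypothesis Hk : k <= r.
Hypothesis Hm : m.+1 = n - k.
Hypothesis Hbound : forall d, 0 < d <= m -> Fx d != setT -> rk (Fx d) <= r - k.

Definition u d := if Fx d == setT then (r - k).+1 else rk (Fx d).
Definition v d := dual_rank rk (Gx d).
Definition a d := ((Fx d != Fx d.+1) + (Gx d != Gx d.+1))%N.
Definition t d := u d + (n - r - v d).

Lemma properneq (A B : {set E}) : A \proper B -> (A != B) /\ (B != A).
Proof. by rewrite properEneq => /andP[h _]; split => //; rewrite eq_sym. Qed.

Lemma ub d : d <= m -> Fx d != setT -> rk (Fx d) <= r - k.
Proof.
case: d => [|d] Hd HT; first by rewrite /Fext /= (rk0 Hmat).
exact: Hbound.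
Qed.

Lemma u_step d : d <= m -> u d + (Fx d != Fx d.+1) <= u d.+1.
Proof.
move=> Hd; case: (eqVneq (Fx d) (Fx d.+1)) => [e|ne]; first by rewrite /u e addn0.
have Fp : Fx d \proper Fx d.+1 by rewrite properEneq ne Fmono.
have FdT : Fx d != setT.
  by apply/eqP => e; move: Fp; rewrite e properE subsetT andbF.
rewrite /u (negbTE FdT) addn1; case: eqP => [FT|/eqP FnT].
  by rewrite ltnS ub.
case: d Hd ne Fp FdT FnT => [|d] Hd _ Fp _ FnT.
  by rewrite {1}/Fext /= (rk0 Hmat); exact: (rk_pos Hmat Hloop (Fne0 (ltn0Sn 0))).
apply: flat_rank_lt => //; exact: Fflat.
Qed.

Lemma v_step d : d <= m -> v d.+1 + (Gx d != Gx d.+1) <= v d.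
Proof.
move=> Hd; case: (eqVneq (Gx d) (Gx d.+1)) => [e|ne]; first by rewrite /v e addn0.
have Gp : Gx d.+1 \proper Gx d by rewrite properEneq eq_sym ne Gmono.
rewrite /v addn1.
case: (ltngtP d m) Hd => [Hlt|Hgt|Heq] Hd'.
- apply: dual_flat_rank_lt => //; apply: Gflat => //; exact: Hlt.
- by exfalso; move: Hgt Hd'; lia.
- rewrite {1}/Gext /= Heq ltnn dual_rank0; apply: dual_rank_pos => //; apply: Gne0.
  by [].
Qed.

Lemma v_le d : v d <= n - r.
Proof.
have := dual_rank_mono Hmat (subsetT (Gx d)); rewrite dual_rankT // Hrank.
by rewrite /v subSS.
Qed.

Lemma rn : r.+1 <= n.
Proof. by rewrite -Hrank; apply: r_lt_n. Qed.

Lemma t_step d : d <= m -> t d + a d <= t d.+1.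
Proof.
move=> Hd; have := u_step Hd; have := v_step Hd; have := v_le d; have := v_le d.+1.
rewrite /t /a; lia.
Qed.

Lemma a_pos d : d <= m -> 0 < a d.
Proof. by move=> Hd; have := step Hd; rewrite /a; case: (_ != _); case: (_ != _). Qed.

Lemma t0 : t 0 = 0.
Proof.
rewrite /t /u /v /Fext /Gext /= eq_sym (negbTE setT_neq0) (rk0 Hmat) dual_rankT // Hrank.
by rewrite subSS subnn.
Qed.

Lemma tm : t m.+1 = m.+2.
Proof.
rewrite /t /u /v /Fext /Gext /= ltnn eqxx dual_rank0 subn0.
have := rn; lia.
Qed.

Lemma exact_steps : exists2 d0, d0 <= m & forall d, d <= m ->
  t d.+1 = t d + a d /\ a d = (d == d0).+1.
Proof.
have [d0 Hd0 [Fp Gp]] := simul.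
exists d0 => //; apply: count_lemma => //.
- exact: t_step.
- exact: a_pos.
- exact: t0.
- exact: tm.
- by rewrite /a; case: (properneq Fp) => -> _; case: (properneq Gp) => _ ->.
Qed.

Lemma u_inc d : d <= m -> u d.+1 = u d + (Fx d != Fx d.+1).
Proof.
move=> Hd; have [d0 _ H] := exact_steps; have [h1 _] := H d Hd.
have := u_step Hd; have := v_step Hd; have := v_le d; have := v_le d.+1.
move: h1; rewrite /t /a; lia.
Qed.

Lemma v_inc d : d <= m -> v d = v d.+1 + (Gx d != Gx d.+1).
Proof.
move=> Hd; have [d0 _ H] := exact_steps; have [h1 _] := H d Hd.
have := u_step Hd; have := v_step Hd; have := v_le d; have := v_le d.+1.
move: h1; rewrite /t /a; lia.
Qed.

Lemma part1 : exists! d : nat, d <= m /\ Fx d \proper Fx d.+1 /\ Gx d.+1 \proper Gx d.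
Proof.
have [d0 Hd0 H] := exact_steps.
have [d1 Hd1 [Fp Gp]] := simul.
have e : d1 = d0.
  have [_ h] := H d1 Hd1; move: h; rewrite /a.
  case: (properneq Fp) => -> _; case: (properneq Gp) => _ ->.
  by case: eqP.
exists d1; split => // d' [Hd' [Fp' Gp']].
have [_ h] := H d' Hd'; move: h; rewrite /a e.
case: (properneq Fp') => -> _; case: (properneq Gp') => _ ->.
by case: eqP.
Qed.

Lemma part3 j : j <= n - r -> exists2 d : nat, d <= m.+1 & dual_rank rk (Gx d) = j.
Proof.
move=> Hj.
have [d Hd hd] : exists2 d, d <= m.+1 & n - r - v d = n - r - j.
  apply: ivt.
    move=> d Hd; have := v_inc Hd; have := v_le d; have := v_le d.+1; lia.
  rewrite /v /Gext /= ltnn dual_rank0 dual_rankT // Hrank subSS subnn; apply/andP; split; lia.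
exists d => //; have := v_le d; move: hd; rewrite /v; lia.
Qed.

Definition D := [set Fx i.+1 | i : 'I_m] :\ setT.

Lemma memD F : F \in D -> exists2 d, 0 < d <= m & F = Fx d /\ F != setT.
Proof.
rewrite !inE => /andP[FT /imsetP[i _ eF]]; exists i.+1; last by split.
by rewrite /= ltn_ord.
Qed.

Lemma D_rank F : F \in D -> 0 < rk F <= r - k.
Proof.
case/memD => d /andP[H0 H1] [-> FT]; rewrite (rk_pos Hmat Hloop (Fne0 H0)) ub //.
Qed.

Lemma D_inj_aux d1 d2 : 0 < d1 <= m -> d1 <= d2 -> d2 <= m -> rk (Fx d1) = rk (Fx d2) -> Fx d1 = Fx d2.
Proof.
move=> Hd1 H12 Hd2 Hr; have [//|Hp] := eqVproper (Fmono_le H12 (leqW Hd2)).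
by have := flat_rank_lt Hmat (Fflat Hd1) Hp; rewrite Hr ltnn.
Qed.

Lemma D_inj F1 F2 : F1 \in D -> F2 \in D -> rk F1 = rk F2 -> F1 = F2.
Proof.
case/memD => d1 Hd1 [-> _]; case/memD => d2 Hd2 [-> _].
case/andP: (Hd1) => _ h1; case/andP: (Hd2) => _ h2.
case: (leqP d1 d2) => h Hr; first exact: D_inj_aux.
by symmetry; apply: D_inj_aux => //; exact: ltnW.
Qed.

Lemma D_exists j : 0 < j <= r - k -> exists2 F, F \in D & rk F = j.
Proof.
case/andP => j0 jr.
have [d Hd hd] : exists2 d, d <= m.+1 & u d = j.
  apply: ivt.
    move=> d Hd; rewrite u_inc //; case: (_ != _) => /=; lia.
  rewrite /u /Fext /= ltnn eqxx eq_sym (negbTE setT_neq0) (rk0 Hmat); apply/andP; split; lia.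
case: d Hd hd => [|d] Hd hd; first by move: hd; rewrite /u /Fext /= eq_sym (negbTE setT_neq0) (rk0 Hmat); lia.
have dm : d < m.
  rewrite ltnNge; apply/negP => dm; have e : d = m by apply/eqP; rewrite eqn_leq dm andbT.
  by move: hd; rewrite e /u /Fext /= ltnn eqxx; lia.
have FT : Fx d.+1 != setT by apply/eqP => e; move: hd; rewrite /u e eqxx; lia.
exists (Fx d.+1); last by move: hd; rewrite /u (negbTE FT).
by rewrite !inE FT /=; apply/imsetP; exists (Ordinal dm).
Qed.

Lemma part2 : #|D| = r - k /\ (forall j : nat, (exists2 F, F \in D & rk F = j) <-> 0 < j <= r - k).
Proof.
split; last first.
  move=> j; split; last exact: D_exists.
  by case=> F FD <-; exact: D_rank.
pose g (F : {set E}) : 'I_(r - k).+1 := inord (rk F).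
have gv F : F \in D -> val (g F) = rk F.
  by move=> FD; rewrite /g /= inordK // ltnS; case/andP: (D_rank FD).
rewrite -(card_in_imset (f := g)); last first.
  by move=> F1 F2 h1 h2 /(congr1 val); rewrite !gv //; apply: D_inj.
have -> : g @: D = [set~ ord0].
  apply/setP => i; rewrite !inE; apply/imsetP/idP.
    case=> F FD ->; apply/eqP => /(congr1 val); rewrite gv //=.
    by case/andP: (D_rank FD) => /[swap] _; rewrite lt0n => /eqP.
  move=> i0; have [F FD hF] : exists2 F, F \in D & rk F = i.
    apply: D_exists; apply/andP; split; last by rewrite -ltnS ltn_ord.
    by rewrite lt0n; apply: contra i0 => /eqP h; apply/eqP/val_inj.
  by exists F => //; apply/val_inj; rewrite gv.
by rewrite cardsC1 card_ord.
Qed.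

End Comb.


Unset Implicit Arguments.
Set Strict Implicit.
Set Printing Implicit Defensive.
Local Open Scope ring_scope.

Theorem mainTheorem13 (R : realType) (n r k : nat) (rk : {set 'I_n.+1} -> nat)
  (Hmat : is_matroid_rank rk) (Hloop : no_loops rk) (Hcoloop : no_coloops rk)
  (Hrank : rk [set: 'I_n.+1] = r.+1) (Hk : (k <= r)%N)
  (f : nat -> biflat rk) (e : nat -> 'I_n.+1)
  (HT : in_T (n - k - 1) f e)
  (Hnz : nonzero_in_chow
           ((\prod_(i < n - k - 1) xvar R (f i.+1)) * (gam rk R (@ord0 n)) ^+ k)) :
  let m := (n - k - 1)%N in
  let Fx := Fext m f in
  let Gx := Gext m f in
  (exists! d : nat, (d <= m)%N /\ Fx d \proper Fx d.+1 /\ Gx d.+1 \proper Gx d)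
  /\
  (let D := [set Fx i.+1 | i : 'I_m] :\ [set: 'I_n.+1] in
   #|D| = (r - k)%N /\
   (forall j : nat, (exists2 F, F \in D & rk F = j) <-> (0 < j <= r - k)%N))
  /\
  (forall j : nat, (j <= n - r)%N ->
     exists2 d : nat, (d <= m.+1)%N & dual_rank rk (Gx d) = j).
Proof.
move=> m Fx Gx; rewrite {}/Fx {}/Gx.
case: HT => Hflag [Hinj Hchain _ _ _].
have rn : (r.+1 <= n)%N by rewrite -Hrank; apply: r_lt_n.
have Hm : m.+1 = (n - k)%N by rewrite /m; lia.
have Hbound : forall d, (0 < d <= m)%N -> Fext m f d != setT -> (rk (Fext m f d) <= r - k)%N.
  move=> d /andP[d0 dm] FT; rewrite leqNgt; apply/negP => Hlt; apply: Hnz.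
  have eF : Fext m f d = (val (f d)).1 by rewrite /Fext eqn0Ngt d0 /= dm.
  rewrite eF in FT Hlt.
  have := @L1 n rk R Hmat k [set f i.+1 | i : 'I_m] (f d).
  have dB : f d \in [set f i.+1 | i : 'I_m].
    have dm1 : (d.-1 < m)%N by lia.
    by apply/imsetP; exists (Ordinal dm1) => //=; rewrite prednK.
  move=> /(_ dB FT) H.
  have Hr : (rk setT <= rk (val (f d)).1 + k)%N by rewrite Hrank; lia.
  move: (H Hr); rewrite big_imset /=; first by [].
  move=> i j _ _ /Hinj => h.
  have hi : (0 < i.+1 <= n - k - 1)%N by rewrite /= (ltn_ord i).
  have hj : (0 < j.+1 <= n - k - 1)%N by rewrite /= (ltn_ord j).
  by apply/val_inj; have [] := h hi hj.
split; first exact: (part1 Hmat Hloop Hcoloop Hinj Hchain Hflag Hrank Hk Hm Hbound).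
split; last exact: (part3 Hmat Hloop Hcoloop Hinj Hchain Hflag Hrank Hk Hm Hbound).
exact: (part2 Hmat Hloop Hcoloop Hinj Hchain Hflag Hrank Hk Hm Hbound).
Qed.
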